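(* Let $(\mathfrak{A},\varphi,\tau)$ be a $*$-dynamical system and let $\mathfrak{T}$ be any $\varphi$-total set in $\mathfrak{A}$. Then: (i) If $(\mathfrak{A},\varphi,\tau)$ is ergodic, then $\left\|\frac1n\sum_{k=0}^{n-1}\tau^k(A)-\varphi(A)\right\|_\varphi\to0$ as $n\to\infty$ for every $A\in\mathfrak{A}$. (ii) If $\left\|\frac1n\sum_{k=0}^{n-1}\tau^k(A)-\varphi(A)\right\|_\varphi\to0$ as $n\to\infty$ for every $A\in\mathfrak{T}$, then $(\mathfrak{A},\varphi,\tau)$ is ergodic.
   Context: All algebras are over $\mathbb{C}$. A state on a unital $*$-algebra $\mathfrak{A}$ is a linear functional $\varphi$ with $\varphi(A^*A)\ge0$ for all $A$ and $\varphi(1)=1$. A $*$-dynamical system is a triple $(\mathfrak{A},\varphi,\tau)$ with $\mathfrak{A}$ a unital $*$-algebra, $\varphi$ a state, and $\tau:\mathfrak{A}\to\mathfrak{A}$ linear with $\tau(1)=1$ and $\varphi(\tau(A)^*\tau(A))\le\varphi(A^*A)$ for all $A$. Let $\|A\|_\varphi=\sqrt{\varphi(A^*A)}$ and identify $\alpha\in\mathbb{C}$ with $\alpha1$. The system is ergodic if for every sequence $(A_n)$ with $\|\tau(A_n)-A_n\|_\varphi\to0$ which is Cauchy for $\|\cdot\|_\varphi$ (for every $\varepsilon>0$ there is $N$ with $\|A_m-A_n\|_\varphi\le\varepsilon$ for $m,n>N$), there is $\alpha\in\mathbb{C}$ with $\|A_n-\alpha\|_\varphi\to0$. A subset of $\mathfrak{A}$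 is $\varphi$-total if its linear span is dense in the seminormed space $(\mathfrak{A},\|\cdot\|_\varphi)$. *)

(* Defs.v *)
From HB Require Import structures.
From mathcomp Require Import all_boot all_order all_algebra.
From mathcomp Require Import all_classical all_reals all_analysis.
From mathcomp Require Import complex.
Set Implicit Arguments. Unset Strict Implicit. Unset Printing Implicit Defensive.
Import Order.TTheory GRing.Theory Num.Theory numFieldNormedType.Exports.
Local Open Scope classical_set_scope.
Local Open Scope ring_scope.

Definition is_star_involution (R : realType) (A : algType R[i]) (star : A -> A)
  : Prop :=
  (forall x, star (star x) = x) /\
  (forall (a : R[i]) (x y : A), star (a *: x + y) = (Num.conj a) *: star x + star y) /\
  (forall x y : A, star (x * y) = star y * star x).

Definition is_linear_functional (R : realType) (A : algType R[i]) (phi : A -> R[i])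
  : Prop :=
  forall (a : R[i]) (x y : A), phi (a *: x + y) = a * phi x + phi y.

Definition is_state (R : realType) (A : algType R[i]) (star : A -> A)
  (phi : A -> R[i]) : Prop :=
  is_linear_functional phi /\ (forall x, 0 <= phi (star x * x)) /\ phi 1 = 1.

(* The seminorm ||x||_phi = sqrt (phi (x^* x)); phi(x^* x) is real >= 0. *)
Definition phinorm (R : realType) (A : algType R[i]) (star : A -> A)
  (phi : A -> R[i]) (x : A) : R :=
  Num.sqrt (complex.Re (phi (star x * x))).

Definition is_star_dyn_system (R : realType) (A : algType R[i]) (star : A -> A)
  (phi : A -> R[i]) (tau : A -> A) : Prop :=
  is_star_involution star /\ is_state star phi /\
  (forall (a : R[i]) (x y : A), tau (a *: x + y) = a *: tau x + tau y) /\
  tau 1 = 1 /\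
  (forall x, phi (star (tau x) * tau x) <= phi (star x * x)).

Definition phi_cauchy (R : realType) (A : algType R[i]) (star : A -> A)
  (phi : A -> R[i]) (u : nat -> A) : Prop :=
  forall eps : R, 0 < eps -> exists N : nat, forall m n : nat,
    (N < m)%N -> (N < n)%N -> phinorm star phi (u m - u n) <= eps.

Definition ergodic (R : realType) (A : algType R[i]) (star : A -> A)
  (phi : A -> R[i]) (tau : A -> A) : Prop :=
  forall u : nat -> A,
    (fun n => phinorm star phi (tau (u n) - u n)) @ \oo --> (0 : R) ->
    phi_cauchy star phi u ->
    exists alpha : R[i], (fun n => phinorm star phi (u n - alpha%:A)) @ \oo --> (0 : R).

Definition phi_total (R : realType) (A : algType R[i]) (star : A -> A)
  (phi : A -> R[i]) (T : A -> Prop) : Prop :=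
  forall (x : A) (eps : R), 0 < eps ->
    exists (n : nat) (c : 'I_n -> R[i]) (t : 'I_n -> A),
      (forall i, T (t i)) /\
      phinorm star phi (x - \sum_(i < n) c i *: t i) < eps.

Definition erg_avg_dev (R : realType) (A : algType R[i]) (phi : A -> R[i])
  (tau : A -> A) (x : A) (n : nat) : A :=
  (n%:R)^-1 *: (\sum_(k < n) iter k tau x) - (phi x)%:A.

(* Main.v *)
Require Import Defs.
From HB Require Import structures.
From mathcomp Require Import all_boot all_order all_algebra.
From mathcomp Require Import all_classical all_reals all_analysis.
From mathcomp Require Import complex.
From mathcomp Require Import ring lra.
Import Order.TTheory GRing.Theory Num.Theory numFieldNormedType.Exports.
Local Open Scope classical_set_scope.
Local Open Scope complex_scope.
Local Open Scope ring_scope.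
Local Notation cRe := complex.Re. 
Local Notation cIm := complex.Im.
Section Cx.
Context {R : realType}.
Lemma conjR (t : R) : Num.conj (t%:C) = t%:C.
Proof. by apply: conj_Creal; rewrite complex_real. Qed.
Lemma ReMR (t : R) (z : R[i]) : cRe (t%:C * z) = t * cRe z.
Proof. by case: z => a b /=; rewrite mul0r subr0. Qed.
Lemma ImMR (t : R) (z : R[i]) : cIm (t%:C * z) = t * cIm z.
Proof. by case: z => a b /=; rewrite mul0r addr0. Qed.
Lemma ReMi (z : R[i]) : cRe ('i * z) = - cIm z.
Proof. by rewrite mulrC -complexiE ReiNIm. Qed.
Lemma ImMi (z : R[i]) : cIm ('i * z) = cRe z.
Proof. by rewrite mulrC -complexiE ImiRe. Qed.
Lemma conji : Num.conj ('i : R[i]) = - 'i.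
Proof. exact: conjCi. Qed.
Lemma ReD (z w : R[i]) : cRe (z + w) = cRe z + cRe w. Proof. by case: z; case: w. Qed.
Lemma ImD (z w : R[i]) : cIm (z + w) = cIm z + cIm w. Proof. by case: z; case: w. Qed.
Lemma ReN (z : R[i]) : cRe (- z) = - cRe z. Proof. by case: z. Qed.
Lemma ImN (z : R[i]) : cIm (- z) = - cIm z. Proof. by case: z. Qed.
Lemma ReR (t : R) : cRe t%:C = t. Proof. by []. Qed.
Lemma ImR (t : R) : cIm t%:C = 0. Proof. by []. Qed.
Lemma natC n : (n%:R : R[i]) = (n%:R : R)%:C. Proof. by rewrite rmorph_nat. Qed.
Lemma natVC n : ((n%:R)^-1 : R[i]) = ((n%:R)^-1 : R)%:C. Proof. by rewrite fmorphV rmorph_nat. Qed.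
Lemma ge0C (z : R[i]) : 0 <= z -> cIm z = 0 /\ 0 <= cRe z.
Proof. by rewrite lecE => /andP[/eqP /= -> ->]. Qed.
Lemma cplx_ext (z w : R[i]) : cRe z = cRe w -> cIm z = cIm w -> z = w.
Proof. by case: z; case: w => /= a b c d -> ->. Qed.
Lemma cdecomp (c : R[i]) : c = (cRe c)%:C + 'i * (cIm c)%:C.
Proof. by rewrite {1}[c]complexE complexiE. Qed.
Lemma conjcE (z : R[i]) : Num.conj z = (cRe z)%:C - 'i * (cIm z)%:C.
Proof. by rewrite {1}[z]cdecomp rmorphD rmorphM /= !conjR conji mulNr. Qed.
Lemma ReJ (z : R[i]) : cRe (Num.conj z) = cRe z.
Proof. rewrite conjcE ReD ReN ReMi ImR ReR; lra. Qed.
Lemma ImJ (z : R[i]) : cIm (Num.conj z) = - cIm z.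
Proof. rewrite conjcE ImD ImN ImMi ImR ReR; lra. Qed.
End Cx.

Section Lim.
Context {R : realType}.
Lemma cvg0P (u : nat -> R) : u @ \oo --> (0 : R) <->
  (forall e : R, 0 < e -> exists N, forall n, (N <= n)%N -> `|u n| <= e).
Proof.
split.
  move/cvgrPdist_le => H e e0; have [N _ HN] := H e e0.
  by exists N => n Nn; have := HN n Nn; rewrite sub0r normrN.
move=> H; apply/cvgrPdist_le => e e0; have [N HN] := H e e0.
by exists N => // n /= Nn; rewrite sub0r normrN; apply: HN.
Qed.

Lemma cauchyR (u : nat -> R) :
  (forall e : R, 0 < e -> exists N, forall m n, (N <= m)%N -> (N <= n)%N -> `|u m - u n| <= e) ->
  exists l : R, forall e : R, 0 < e -> exists N, forall n, (N <= n)%N -> `|u n - l| <= e.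
Proof.
move=> H.
have cv : cvg (u @ \oo).
  apply: cauchy_cvg; apply/cauchy_exP => e e0.
  have [N HN] := H (e / 2) (divr_gt0 e0 (ltr0Sn _ 1)).
  exists (u N); exists N => // n /= Nn.
  rewrite /ball /=; apply: le_lt_trans (HN N n (leqnn N) Nn) _.
  by rewrite ltr_pdivrMr // ltr_pMr // ltr1n.
exists (lim (u @ \oo)) => e e0.
move/cvgrPdist_le: cv => /(_ e e0) [N _ HN].
by exists N => n Nn; rewrite distrC; apply: HN.
Qed.

Lemma inv_small (c d : R) : 0 <= c -> 0 < d ->
  exists N, forall k, (N <= k)%N -> (k%:R)^-1 * c <= d.
Proof.
move=> c0 d0; exists (Num.Def.archi_bound (c / d)).+1 => k Nk.
have k0 : (0 : R) < k%:R by rewrite ltr0n; apply: leq_trans Nk.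
have H1 : c / d < k%:R.
  have Hb := archi_boundP (divr_ge0 c0 (ltW d0)).
  apply: lt_le_trans Hb _; rewrite ler_nat; exact: leq_trans (leqnSn _) Nk.
rewrite ltr_pdivrMr // in H1.
by rewrite mulrC ler_pdivrMr // mulrC ltW.
Qed.

Lemma small0 (r : R) : (forall e : R, 0 < e -> `|r| <= e) -> r = 0.
Proof.
move=> H; apply/eqP; apply: contraT => rne0.
have r0 : 0 < `|r| by rewrite normr_gt0.
have := H (`|r| / 2) (divr_gt0 r0 (ltr0Sn _ 1)).
rewrite ler_pdivlMr // => H2; exfalso; lra.
Qed.
End Lim.
Section Alg.
Variables (R : realType) (A : algType R[i]) (star : A -> A) (phi : A -> R[i]) (tau : A -> A).
Hypothesis Hinv : is_star_involution star.
Hypothesis Hst : is_state star phi.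

Lemma starDZ a x y : star (a *: x + y) = Num.conj a *: star x + star y.
Proof. by case: Hinv => _ [] H _; apply: H. Qed.
Lemma starK x : star (star x) = x.
Proof. by case: Hinv. Qed.
Lemma starM x y : star (x * y) = star y * star x.
Proof. by case: Hinv => _ []. Qed.
Lemma star0 : star 0 = 0.
Proof.
have := starDZ 1 0 0; rewrite scale1r addr0 conjC1 scale1r -{1}[star 0]addr0.
by move/addrI.
Qed.
Lemma starZ a x : star (a *: x) = Num.conj a *: star x.
Proof. by have := starDZ a x 0; rewrite !addr0 star0 addr0. Qed.
Lemma starD x y : star (x + y) = star x + star y.
Proof. by have := starDZ 1 x y; rewrite !scale1r conjC1 scale1r. Qed.
Lemma starN x : star (- x) = - star x.
Proof. by rewrite -scaleN1r starZ conjCN1 scaleN1r. Qed.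
Lemma starB x y : star (x - y) = star x - star y.
Proof. by rewrite starD starN. Qed.
Lemma star1 : star 1 = 1.
Proof.
have H : forall x, x * star 1 = x.
  by move=> x; rewrite -[LHS]starK starM starK mul1r starK.
by rewrite -[RHS](H 1) mul1r.
Qed.

Lemma phiDZ a x y : phi (a *: x + y) = a * phi x + phi y.
Proof. by case: Hst => H _; apply: H. Qed.
Lemma phi0 : phi 0 = 0.
Proof.
have := phiDZ 1 0 0; rewrite scale1r addr0 mul1r -{1}[phi 0]addr0.
by move/addrI.
Qed.
Lemma phiZ a x : phi (a *: x) = a * phi x.
Proof. by have := phiDZ a x 0; rewrite !addr0 phi0 addr0. Qed.
Lemma phiD x y : phi (x + y) = phi x + phi y.
Proof. by have := phiDZ 1 x y; rewrite !scale1r mul1r. Qed.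
Lemma phiN x : phi (- x) = - phi x.
Proof. by rewrite -scaleN1r phiZ mulN1r. Qed.
Lemma phiB x y : phi (x - y) = phi x - phi y.
Proof. by rewrite phiD phiN. Qed.
Lemma phi1 : phi 1 = 1.
Proof. by case: Hst => _ []. Qed.
Lemma phi_pos x : 0 <= phi (star x * x).
Proof. by case: Hst => _ []. Qed.

Lemma phi_expand (a b : A) (c : R[i]) :
  phi (star (a + c *: b) * (a + c *: b)) =
  phi (star a * a) + c * phi (star a * b) + Num.conj c * phi (star b * a)
  + Num.conj c * c * phi (star b * b).
Proof.
have E : star (a + c *: b) * (a + c *: b) = star a * a + c *: (star a * b)
   + Num.conj c *: (star b * a) + (Num.conj c * c) *: (star b * b).
  rewrite starD starZ mulrDl !mulrDr -!scalerAl -!scalerAr scalerA !addrA //.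
rewrite E !phiD !phiZ.
ring.
Qed.

Definition q x := cRe (phi (star x * x)).
Definition P a b := cRe (phi (star a * b) + phi (star b * a)).

Lemma q_ge0 x : 0 <= q x.
Proof. by have [] := ge0C _ (phi_pos x). Qed.
Lemma q_Im x : cIm (phi (star x * x)) = 0.
Proof. by have [] := ge0C _ (phi_pos x). Qed.

Lemma q_expand (a b : A) (t : R) : q (a + t%:C *: b) = q a + t * P a b + t ^+ 2 * q b.
Proof.
rewrite /q phi_expand conjR /P !ReD !ReMR -mulrA ReMR ReMR expr2; ring.
Qed.

Lemma q0 : q 0 = 0.
Proof. by rewrite /q star0 mul0r phi0. Qed.
Lemma P0 b : P 0 b = 0.
Proof. by rewrite /P star0 mul0r mulr0 phi0 addr0. Qed.

Lemma qZR (t : R) b : q (t%:C *: b) = t ^+ 2 * q b.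
Proof. by have := q_expand 0 b t; rewrite add0r q0 P0 mulr0 !add0r. Qed.

Lemma q_add a b : q (a + b) = q a + P a b + q b.
Proof. by have := q_expand a b 1; rewrite rmorph1 scale1r expr1n !mul1r. Qed.
Lemma q_sub a b : q (a - b) = q a - P a b + q b.
Proof.
have := q_expand a b (-1); rewrite rmorphN1 scaleN1r sqrrN expr1n !mul1r mulN1r.
by [].
Qed.

Lemma quad_disc (al be ga : R) : 0 <= al -> 0 <= ga ->
  (forall t, 0 <= al + t * be + t ^+ 2 * ga) -> be ^+ 2 <= 4%:R * al * ga.
Proof.
move=> al0 ga0 H.
have [gapos|] := ltP 0 ga.
  have := H (- be / (2%:R * ga)).
  have -> : al + - be / (2%:R * ga) * be + (- be / (2%:R * ga)) ^+ 2 * ga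
          = (4%:R * al * ga - be ^+ 2) / (4%:R * ga).
    by field; rewrite gt_eqF.
  rewrite pmulr_lge0 ?invr_gt0 ?mulr_gt0 //; lra.
move=> ga_le0; have ga00 : ga = 0 by lra.
have [be0|be_ne0] := eqVneq be 0; first by rewrite be0 ga00; lra.
have := H (- (al + 1) / be).
rewrite ga00 mulr0 addr0 divfK //; lra.
Qed.

Lemma CS a b : P a b ^+ 2 <= 4%:R * q a * q b.
Proof.
apply: quad_disc; rewrite ?q_ge0 // => t; rewrite -q_expand; exact: q_ge0.
Qed.

Notation nrm x := (phinorm star phi x).
Lemma nrm_ge0 x : 0 <= nrm x. Proof. exact: sqrtr_ge0. Qed.
Lemma nrm_sq x : nrm x ^+ 2 = q x. Proof. by rewrite sqr_sqrtr // q_ge0. Qed.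

Lemma P_le a b : P a b <= 2%:R * nrm a * nrm b.
Proof.
have := CS a b; rewrite -!nrm_sq => H.
have m0 : 0 <= 2%:R * nrm a * nrm b by rewrite !mulr_ge0 ?nrm_ge0.
have E : 4%:R * nrm a ^+ 2 * nrm b ^+ 2 = (2%:R * nrm a * nrm b) ^+ 2 by ring.
rewrite E in H; move: m0 H; set m := 2%:R * nrm a * nrm b; set p := P a b.
move=> m0 H; rewrite leNgt; apply/negP => pm; nra.
Qed.

Lemma nrmD a b : nrm (a + b) <= nrm a + nrm b.
Proof.
have H : nrm (a + b) ^+ 2 <= (nrm a + nrm b) ^+ 2.
  rewrite nrm_sq q_add -!nrm_sq; have := P_le a b; nra.
have := nrm_ge0 (a + b); have := nrm_ge0 a; have := nrm_ge0 b; nra.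
Qed.

Lemma nrmZR (t : R) b : nrm (t%:C *: b) = `|t| * nrm b.
Proof.
by rewrite /phinorm -/(q _) qZR sqrtrM ?sqr_ge0 // sqrtr_sqr.
Qed.

Lemma nrm0 : nrm 0 = 0.
Proof. by rewrite /phinorm -/(q _) q0 sqrtr0. Qed.
Lemma nrmN a : nrm (- a) = nrm a.
Proof.
have -> : - a = (-1 : R)%:C *: a by rewrite rmorphN1 scaleN1r.
by rewrite nrmZR normrN normr1 mul1r.
Qed.
Lemma nrmB a b : nrm (a - b) <= nrm a + nrm b.
Proof. by rewrite -(nrmN b); apply: nrmD. Qed.
Lemma nrm_symm a b : nrm (a - b) = nrm (b - a).
Proof. by rewrite -nrmN opprB. Qed.

Lemma nrmZi b : nrm ('i *: b) = nrm b.
Proof.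
rewrite /phinorm; congr (Num.sqrt _).
have := phi_expand 0 b 'i; rewrite add0r star0 !mul0r mulr0 phi0 !mulr0 !add0r.
move=> ->; rewrite conji mulNr -expr2 sqrCi opprK mul1r //.
Qed.

Lemma nrmZ c b : nrm (c *: b) <= (`|cRe c| + `|cIm c|) * nrm b.
Proof.
rewrite {1}[c]cdecomp scalerDl -scalerA; apply: le_trans (nrmD _ _) _.
by rewrite nrmZi !nrmZR mulrDl.
Qed.

Lemma parallelogram a b : q (a + b) + q (a - b) = 2%:R * q a + 2%:R * q b.
Proof. rewrite q_add q_sub; lra. Qed.

Lemma phi_star y : phi (star y) = Num.conj (phi y).
Proof.
have H1 := q_Im (1 + 1 *: y).
have H2 := q_Im (1 + 'i *: y).
rewrite phi_expand star1 conjC1 !mul1r !mulr1 phi1 !ImD (q_Im y) addr0 in H1.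
rewrite phi_expand star1 !mul1r !mulr1 phi1 conji !mulNr -expr2 sqrCi mulN1r opprK !ImD ImN !ImMi (q_Im y) addr0 in H2.
move: H1 H2 => /= H1 H2.
apply: cplx_ext; rewrite ?ReJ ?ImJ; lra.
Qed.

Lemma q1 : q 1 = 1.
Proof. by rewrite /q star1 mul1r phi1. Qed.
Lemma P1 y : P 1 y = 2%:R * cRe (phi y).
Proof. rewrite /P star1 mul1r mulr1 phi_star ReD ReJ; lra. Qed.

Lemma sq_le_abs (r n : R) : 0 <= n -> r ^+ 2 <= n ^+ 2 -> `|r| <= n.
Proof.
move=> n0 H; rewrite -(sqrtr_sqr r) -[X in _ <= X](ger0_norm n0) -sqrtr_sqr.
exact: ler_wsqrtr.
Qed.

Lemma Re_phi_le y : `|cRe (phi y)| <= nrm y.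
Proof.
apply: sq_le_abs; first exact: nrm_ge0.
have := CS 1 y; rewrite P1 q1 -nrm_sq; nra.
Qed.
Lemma Im_phi_le y : `|cIm (phi y)| <= nrm y.
Proof.
rewrite -(nrmZi y); have := Re_phi_le ('i *: y).
by rewrite phiZ ReMi normrN.
Qed.

Lemma nrm_sum n (f : 'I_n -> A) : nrm (\sum_(i < n) f i) <= \sum_(i < n) nrm (f i).
Proof.
elim: n f => [|n IH] f; first by rewrite !big_ord0 nrm0.
rewrite !big_ord_recr /=; apply: le_trans (nrmD _ _) _.
by rewrite lerD2r IH.
Qed.

Section Dyn.
Hypothesis Htau : forall (a : R[i]) x y, tau (a *: x + y) = a *: tau x + tau y.
Hypothesis Htau1 : tau 1 = 1.
Hypothesis Hcontr : forall x, phi (star (tau x) * tau x) <= phi (star x * x).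

Lemma tau0 : tau 0 = 0.
Proof.
have := Htau 1 0 0; rewrite scale1r addr0 scale1r -{1}[tau 0]addr0.
by move/addrI.
Qed.
Lemma tauZ a x : tau (a *: x) = a *: tau x.
Proof. by have := Htau a x 0; rewrite !addr0 tau0 addr0. Qed.
Lemma tauD x y : tau (x + y) = tau x + tau y.
Proof. by have := Htau 1 x y; rewrite !scale1r. Qed.
Lemma tauN x : tau (- x) = - tau x.
Proof. by rewrite -scaleN1r tauZ scaleN1r. Qed.
Lemma tauB x y : tau (x - y) = tau x - tau y.
Proof. by rewrite tauD tauN. Qed.
Lemma tau_sum n (f : 'I_n -> A) : tau (\sum_(i < n) f i) = \sum_(i < n) tau (f i).
Proof.
elim: n f => [|n IH] f; first by rewrite !big_ord0 tau0.
by rewrite !big_ord_recr /= tauD IH.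
Qed.

Lemma iterZ k a x : iter k tau (a *: x) = a *: iter k tau x.
Proof. by elim: k => [//|k IH]; rewrite !iterS IH tauZ. Qed.
Lemma iterD k x y : iter k tau (x + y) = iter k tau x + iter k tau y.
Proof. by elim: k => [//|k IH]; rewrite !iterS IH tauD. Qed.
Lemma iterB k x y : iter k tau (x - y) = iter k tau x - iter k tau y.
Proof.
by rewrite iterD -scaleN1r iterZ scaleN1r.
Qed.

Lemma q_tau x : q (tau x) <= q x.
Proof. by have := Hcontr x; rewrite lecE => /andP[_]. Qed.
Lemma nrm_tau x : nrm (tau x) <= nrm x.
Proof. exact/ler_wsqrtr/q_tau. Qed.
Lemma nrm_iter k x : nrm (iter k tau x) <= nrm x.
Proof. elim: k => [//|k IH]; rewrite iterS; exact: le_trans (nrm_tau _) IH. Qed.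

Definition S k y := \sum_(j < k) iter j tau y.
Definition M k y := ((k%:R : R[i])^-1) *: S k y.

Lemma S_nrm k y : nrm (S k y) <= k%:R * nrm y.
Proof.
rewrite /S; apply: le_trans (nrm_sum _ _) _.
have -> : k%:R * nrm y = \sum_(j < k) nrm y by rewrite sumr_const card_ord mulr_natl.
by apply: ler_sum => j _; apply: nrm_iter.
Qed.

Lemma M_real k y : M k y = (((k%:R : R)^-1)%:C) *: S k y.
Proof. by rewrite /M natVC. Qed.

Lemma M_nrm k y : nrm (M k y) <= nrm y.
Proof.
rewrite M_real nrmZR ger0_norm ?invr_ge0 ?ler0n //.
case: k => [|k]; first by rewrite invr0 mul0r nrm_ge0.
apply: le_trans (ler_wpM2l _ (S_nrm _ _)) _; first by rewrite invr_ge0 ler0n.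
by rewrite mulrA mulVf ?mul1r // pnatr_eq0.
Qed.

Lemma S_tele k y : tau (S k y) - S k y = iter k tau y - y.
Proof.
elim: k => [|k IH]; first by rewrite /S big_ord0 tau0 !subrr.
rewrite /S big_ord_recr /= -/(S k y) tauD.
have -> : tau (S k y) + tau (iter k tau y) - (S k y + iter k tau y)
   = (tau (S k y) - S k y) + (tau (iter k tau y) - iter k tau y).
  by rewrite opprD addrACA.
rewrite IH -iterS addrC addrA subrK //.
Qed.

Lemma M_tele k y : tau (M k y) - M k y = ((k%:R : R[i])^-1) *: (iter k tau y - y).
Proof. by rewrite /M tauZ -scalerBr S_tele. Qed.

Lemma M_tele_nrm k y : nrm (tau (M k y) - M k y) <= (k%:R)^-1 * (2%:R * nrm y).
Proof.
rewrite M_tele natVC nrmZR ger0_norm ?invr_ge0 ?ler0n //.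
apply: ler_wpM2l; first by rewrite invr_ge0 ler0n.
apply: le_trans (nrmB _ _) _; have := nrm_iter k y; lra.
Qed.

Lemma SB k x y : S k (x - y) = S k x - S k y.
Proof.
rewrite /S -sumrB; apply: eq_bigr => j _; exact: iterB.
Qed.
Lemma MB k x y : M k (x - y) = M k x - M k y.
Proof. by rewrite /M SB scalerBr. Qed.


Lemma iter_sub_nrm j y : nrm (iter j tau y - y) <= j%:R * nrm (tau y - y).
Proof.
elim: j => [|j IH]; first by rewrite /= subrr nrm0 mul0r.
have -> : iter j.+1 tau y - y = iter j tau (tau y - y) + (iter j tau y - y).
  by rewrite iterB -iterSr addrA subrK.
apply: le_trans (nrmD _ _) _; rewrite -addn1 natrD mulrDl mul1r addrC.
by apply: lerD => //; apply: nrm_iter.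
Qed.

Lemma M_sub_nrm k y : (0 < k)%N -> nrm (M k y - y) <= k%:R * nrm (tau y - y).
Proof.
move=> k0.
have kne0 : (k%:R : R) != 0 by rewrite pnatr_eq0 -lt0n.
have E : M k y - y = ((k%:R : R)^-1)%:C *: \sum_(j < k) (iter j tau y - y).
  rewrite sumrB sumr_const card_ord scalerBr -M_real; congr (_ - _).
  have -> : y *+ k = (k%:R : R[i]) *: y by rewrite scaler_nat.
  by rewrite scalerA natC -rmorphM mulVf // rmorph1 scale1r.
rewrite E nrmZR ger0_norm ?invr_ge0 ?ler0n //.
apply: le_trans (ler_wpM2l _ (nrm_sum _ _)) _; first by rewrite invr_ge0 ler0n.
have H : \sum_(j < k) nrm (iter j tau y - y) <= \sum_(j < k) (k%:R * nrm (tau y - y)).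
  apply: ler_sum => j _; apply: le_trans (iter_sub_nrm _ _) _.
  by apply: ler_wpM2r; [apply: nrm_ge0 | rewrite ler_nat ltnW].
apply: le_trans (ler_wpM2l _ H) _; first by rewrite invr_ge0 ler0n.
by rewrite sumr_const card_ord -(mulr_natr (k%:R * _) k) mulrC mulfK.
Qed.

Lemma quad0 (D C : R) : (forall t, t * D <= t ^+ 2 * C) -> D = 0.
Proof.
move=> H; set u := `|C| + 1.
have u0 : 0 < u by rewrite /u ltr_pwDr ?normr_ge0.
have CC : C <= `|C| by apply: ler_norm.
have := H (D / u).
have -> : D / u * D = (D ^+ 2 * u) / u ^+ 2 by field; rewrite gt_eqF.
have -> : (D / u) ^+ 2 * C = (D ^+ 2 * C) / u ^+ 2 by field; rewrite gt_eqF.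
rewrite ler_pM2r ?invr_gt0 ?exprn_gt0 // => H2.
have H3 : D ^+ 2 * C <= D ^+ 2 * `|C| by rewrite ler_wpM2l ?sqr_ge0.
have : D ^+ 2 <= 0 by move: H2 H3; rewrite /u; nra.
by rewrite le_eqVlt ltNge sqr_ge0 orbF sqrf_eq0 => /eqP.
Qed.

Lemma Re_phi_tau x : cRe (phi (tau x)) = cRe (phi x).
Proof.
suff H : 2%:R * (cRe (phi (tau x)) - cRe (phi x)) = 0 by lra.
apply: (@quad0 _ (q x - q (tau x))) => t.
have := q_tau (1 + t%:C *: x).
rewrite tauD Htau1 tauZ !q_expand !P1 q1; lra.
Qed.

Lemma phi_tau x : phi (tau x) = phi x.
Proof.
apply: cplx_ext; first exact: Re_phi_tau.
have := Re_phi_tau ('i *: x); rewrite tauZ !phiZ !ReMi; lra.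
Qed.

Lemma phi_iter k x : phi (iter k tau x) = phi x.
Proof. by elim: k => [//|k IH]; rewrite iterS phi_tau. Qed.

Lemma phi_sum n (f : 'I_n -> A) : phi (\sum_(i < n) f i) = \sum_(i < n) phi (f i).
Proof.
elim: n f => [|n IH] f; first by rewrite !big_ord0 phi0.
by rewrite !big_ord_recr /= phiD IH.
Qed.

Lemma phi_M k x : (0 < k)%N -> phi (M k x) = phi x.
Proof.
move=> k0; rewrite /M phiZ /S phi_sum.
under eq_bigr do rewrite phi_iter.
by rewrite sumr_const card_ord -(mulr_natr (phi x) k) mulrC mulfK // pnatr_eq0 -lt0n.
Qed.

Lemma devE x n : erg_avg_dev phi tau x n = M n x - (phi x)%:A.
Proof. by []. Qed.

Lemma M_lin k a x y : M k (a *: x + y) = a *: M k x + M k y.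
Proof.
rewrite /M /S scalerA mulrC -scalerA -scalerDr; congr (_ *: _).
rewrite scaler_sumr -big_split /=; apply: eq_bigr => j _.
by rewrite iterD iterZ.
Qed.

Lemma dev_lin n a x y :
  erg_avg_dev phi tau (a *: x + y) n = a *: erg_avg_dev phi tau x n + erg_avg_dev phi tau y n.
Proof.
by rewrite !devE M_lin phiDZ scalerDl -scalerA scalerBr opprD addrACA.
Qed.

Lemma dev0 n : erg_avg_dev phi tau 0 n = 0.
Proof.
by rewrite devE phi0 scale0r subr0 /M /S; under eq_bigr do rewrite iter_fix ?tau0 //; rewrite big1 // scaler0.
Qed.

Lemma dev_sum n m (c : 'I_m -> R[i]) (t : 'I_m -> A) :
  erg_avg_dev phi tau (\sum_(i < m) c i *: t i) n =
  \sum_(i < m) c i *: erg_avg_dev phi tau (t i) n.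
Proof.
elim: m c t => [|m IH] c t; first by rewrite !big_ord0 dev0.
rewrite !big_ord_recr /= addrC dev_lin IH addrC //.
Qed.

Lemma dev_nrm x n : nrm (erg_avg_dev phi tau x n) <= 3%:R * nrm x.
Proof.
rewrite devE; apply: le_trans (nrmB _ _) _.
have H : nrm ((phi x)%:A) <= 2%:R * nrm x.
  apply: le_trans (nrmZ _ _) _.
  have -> : nrm 1 = 1 by rewrite /phinorm -/(q 1) q1 sqrtr1.
  rewrite mulr1; have := Re_phi_le x; have := Im_phi_le x; lra.
have := M_nrm n x; lra.
Qed.


Local Notation dev x n := (erg_avg_dev phi tau x n).

Lemma nrm1 : nrm 1 = 1.
Proof. by rewrite /phinorm -/(q 1) q1 sqrtr1. Qed.

Lemma sum_small m (f : 'I_m -> nat -> R) : (forall i n, 0 <= f i n) ->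
  (forall i (e : R), 0 < e -> exists N, forall n, (N <= n)%N -> f i n <= e) ->
  forall e : R, 0 < e -> exists N, forall n, (N <= n)%N -> \sum_(i < m) f i n <= e.
Proof.
elim: m f => [|m IH] f f0 Hf e e0.
  by exists 0%N => n _; rewrite big_ord0 ltW.
have e20 : 0 < e / 2 by rewrite divr_gt0.
have [N1 H1] := IH (fun i => f (widen_ord (leqnSn m) i)) (fun i => f0 _) (fun i => Hf _) _ e20.
have [N2 H2] := Hf ord_max _ e20.
exists (maxn N1 N2) => n Nn; rewrite big_ord_recr /=.
have := H1 n (leq_trans (leq_maxl _ _) Nn); have := H2 n (leq_trans (leq_maxr _ _) Nn).
lra.
Qed.

Lemma all_conv (T : A -> Prop) : phi_total star phi T ->
  (forall x, T x -> (fun n => nrm (dev x n)) @ \oo --> (0 : R)) ->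
  forall x (e : R), 0 < e -> exists N, forall n, (N <= n)%N -> nrm (dev x n) <= e.
Proof.
move=> Htot HT x e e0.
have e60 : 0 < e / 6%:R by rewrite divr_gt0.
have [m [c [t [Ht Hx]]]] := Htot x _ e60.
set s := \sum_(i < m) c i *: t i in Hx.
have e20 : 0 < e / 2 by rewrite divr_gt0.
have [N HN] : exists N, forall n, (N <= n)%N ->
    \sum_(i < m) ((`|cRe (c i)| + `|cIm (c i)|) * nrm (dev (t i) n)) <= e / 2.
  apply: sum_small => //.
    by move=> i n; rewrite mulr_ge0 ?addr_ge0 ?normr_ge0 ?nrm_ge0.
  move=> i e' e'0; set K := `|cRe (c i)| + `|cIm (c i)|.
  have K0 : 0 <= K by rewrite addr_ge0 ?normr_ge0.
  have [N HN] := (cvg0P _).1 (HT _ (Ht i)) (e' / (K + 1)) (divr_gt0 e'0 (ltr_pwDr ltr01 K0)).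
  exists N => n Nn; have := HN n Nn; rewrite ger0_norm ?nrm_ge0 // ler_pdivlMr ?(ltr_pwDr ltr01 K0) //.
  by have := nrm_ge0 (dev (t i) n); nra.
exists N => n Nn.
have E : dev x n = dev (x - s) n + dev s n.
  by rewrite -[dev (x - s) n]scale1r -dev_lin scale1r subrK.
rewrite E; apply: le_trans (nrmD _ _) _.
have B1 : nrm (dev (x - s) n) <= 3%:R * (e / 6%:R).
  by apply: le_trans (dev_nrm _ _) _; rewrite ler_wpM2l ?ler0n ?ltW.
have B2 : nrm (dev s n) <= e / 2.
  rewrite /s dev_sum; apply: le_trans (nrm_sum _ _) _; apply: le_trans (HN n Nn).
  by apply: ler_sum => i _; apply: nrmZ.
lra.
Qed.

Lemma part2 (T : A -> Prop) : phi_total star phi T ->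
  (forall x, T x -> (fun n => nrm (dev x n)) @ \oo --> (0 : R)) ->
  ergodic star phi tau.
Proof.
move=> Htot HT; have Hall := @all_conv T Htot HT.
move=> u /cvg0P Htu Hc.
have claimA : forall e : R, 0 < e -> exists N, forall m, (N <= m)%N ->
    nrm (u m - (phi (u m))%:A) <= 4%:R * e.
  move=> e e0; have [N0 HN0] := Hc e e0; exists N0.+1 => m Nm.
  have [K HK] := Hall (u m) e e0.
  have k0 : (0 : R) < K.+1%:R by rewrite ltr0n.
  have [N' HN'] := Htu (e / K.+1%:R) (divr_gt0 e0 k0).
  set n := maxn N0.+1 N'.
  have nN0 : (N0 < n)%N by rewrite leq_max leqnn.
  have nN' : (N' <= n)%N by rewrite leq_max leqnn orbT.
  have E : u m - (phi (u m))%:A = (u m - u n) - (M K.+1 (u n) - u n)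
      + M K.+1 (u n - u m) + dev (u m) K.+1.
    by rewrite MB devE opprB !addrA !subrK.
  have B1 : nrm (u m - u n) <= e by apply: HN0.
  have B2 : nrm (M K.+1 (u n) - u n) <= e.
    apply: le_trans (@M_sub_nrm K.+1 (u n) (ltn0Sn K)) _.
    have := HN' n nN'; rewrite ger0_norm ?nrm_ge0 // ler_pdivlMr //; lra.
  have B3 : nrm (M K.+1 (u n - u m)) <= e.
    by apply: le_trans (M_nrm _ _) _; apply: HN0.
  have B4 : nrm (dev (u m) K.+1) <= e by apply: HK.
  rewrite E; apply: le_trans (nrmD _ _) _.
  have C1 := nrmD (u m - u n - (M K.+1 (u n) - u n)) (M K.+1 (u n - u m)).
  have C2 := nrmB (u m - u n) (M K.+1 (u n) - u n).
  lra.
have HcRe : forall e : R, 0 < e -> exists N, forall m n, (N <= m)%N -> (N <= n)%N ->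
    `|cRe (phi (u m)) - cRe (phi (u n))| <= e.
  move=> e e0; have [N HN] := Hc e e0; exists N.+1 => m n Nm Nn.
  by rewrite -ReN -ReD -phiB; apply: le_trans (Re_phi_le _) _; apply: HN.
have HcIm : forall e : R, 0 < e -> exists N, forall m n, (N <= m)%N -> (N <= n)%N ->
    `|cIm (phi (u m)) - cIm (phi (u n))| <= e.
  move=> e e0; have [N HN] := Hc e e0; exists N.+1 => m n Nm Nn.
  by rewrite -ImN -ImD -phiB; apply: le_trans (Im_phi_le _) _; apply: HN.
have [a Ha] := cauchyR _ HcRe.
have [b Hb] := cauchyR _ HcIm.
exists (Complex a b); apply/cvg0P => e e0.
have [N1 H1] := claimA (e / 8%:R) (divr_gt0 e0 (ltr0n _ 8)).
have [N2 H2] := Ha (e / 4%:R) (divr_gt0 e0 (ltr0n _ 4)).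
have [N3 H3] := Hb (e / 4%:R) (divr_gt0 e0 (ltr0n _ 4)).
exists (maxn N1 (maxn N2 N3)) => n Nn.
rewrite ger0_norm ?nrm_ge0 //.
have E : u n - (Complex a b)%:A = (u n - (phi (u n))%:A) + (phi (u n) - Complex a b) *: 1.
  by rewrite scalerBl addrA subrK.
rewrite E; apply: le_trans (nrmD _ _) _.
apply: le_trans (lerD (lexx _) (nrmZ _ _)) _.
rewrite nrm1 mulr1 ReD ImD ReN ImN /=.
have := H1 n (leq_trans (leq_maxl _ _) Nn).
have := H2 n (leq_trans (leq_maxl _ _) (leq_trans (leq_maxr _ _) Nn)).
have := H3 n (leq_trans (leq_maxr _ _) (leq_trans (leq_maxr _ _) Nn)).
lra.
Qed.


Definition Wset w := exists z, w = z - tau z.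

Lemma W0 : Wset 0.
Proof. by exists 0; rewrite tau0 subr0. Qed.
Lemma WD w1 w2 : Wset w1 -> Wset w2 -> Wset (w1 + w2).
Proof.
move=> [z1 ->] [z2 ->]; exists (z1 + z2).
by rewrite tauD opprD addrACA.
Qed.
Lemma WZ a w : Wset w -> Wset (a *: w).
Proof. by move=> [z ->]; exists (a *: z); rewrite tauZ scalerBr. Qed.
Lemma WB w1 w2 : Wset w1 -> Wset w2 -> Wset (w1 - w2).
Proof. by move=> H1 H2; apply: WD => //; rewrite -scaleN1r; apply: WZ. Qed.

Lemma W_iter x j : Wset (iter j tau x - x).
Proof.
elim: j => [|j IH]; first by rewrite /= subrr; apply: W0.
have -> : iter j.+1 tau x - x = (iter j tau x - x) - (iter j tau x - tau (iter j tau x)).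
  by rewrite opprB [RHS]addrC [RHS]addrA subrK iterS.
by apply: WB => //; exists (iter j tau x).
Qed.

Lemma W_sum x k : Wset (\sum_(j < k) (iter j tau x - x)).
Proof.
elim: k => [|k IH]; first by rewrite big_ord0; apply: W0.
by rewrite big_ord_recr /=; apply: WD => //; apply: W_iter.
Qed.

Lemma M_sub_eq k y : (0 < k)%N ->
  M k y - y = ((k%:R : R)^-1)%:C *: \sum_(j < k) (iter j tau y - y).
Proof.
move=> k0.
have kne0 : (k%:R : R) != 0 by rewrite pnatr_eq0 -lt0n.
rewrite sumrB sumr_const card_ord scalerBr -M_real; congr (_ - _).
have -> : y *+ k = (k%:R : R[i]) *: y by rewrite scaler_nat.
by rewrite scalerA natC -rmorphM mulVf // rmorph1 scale1r.
Qed.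

Lemma W_M x k : (0 < k)%N -> Wset (M k x - x).
Proof. by move=> k0; rewrite M_sub_eq //; apply: WZ; apply: W_sum. Qed.

Lemma M_tau k z : M k (tau z) = tau (M k z).
Proof.
rewrite /M /S tauZ tau_sum; congr (_ *: _); apply: eq_bigr => j _.
by rewrite -iterSr iterS.
Qed.

Lemma half_id (a b x : A) :
  ((2%:R : R)^-1)%:C *: (a + b) - x = ((2%:R : R)^-1)%:C *: ((a - x) + (b - x)).
Proof.
rewrite addrACA -opprD [in RHS]scalerBr; congr (_ - _).
have -> : x + x = (2%:R : R)%:C *: x by rewrite rmorph_nat scaler_nat.
by rewrite scalerA -rmorphM mulVf ?pnatr_eq0 // rmorph1 scale1r.
Qed.

Lemma part1 : ergodic star phi tau ->
  forall x, (fun n => nrm (dev x n)) @ \oo --> (0 : R).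
Proof.
move=> Herg x.
pose E := [set r : R | exists w, Wset w /\ r = nrm (x + w)].
have E0 : E !=set0 by exists (nrm (x + 0)); exists 0; split => //; apply: W0.
have Elb : has_lbound E by exists 0 => r [w [_ ->]]; apply: nrm_ge0.
pose d := inf E.
have d_le : forall w, Wset w -> d <= nrm (x + w).
  by move=> w Ww; apply: ge_inf => //; exists w.
have d0 : 0 <= d by apply: lb_le_inf => // r [w [_ ->]]; apply: nrm_ge0.
have claimB : forall eta : R, 0 < eta -> exists N, forall k, (N <= k)%N ->
    nrm (M k x) <= d + eta.
  move=> eta eta0; have eta20 : 0 < eta / 2 by rewrite divr_gt0.
  have [r [w [[z ->] ->]] Hr] := inf_adherent eta20 (conj E0 Elb).
  have [N HN] := inv_small _ _ (mulr_ge0 (ler0n R 2) (nrm_ge0 z)) eta20.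
  exists N => k Nk.
  have -> : M k x = M k (x + (z - tau z)) - M k (z - tau z) by rewrite -MB addrK.
  apply: le_trans (nrmB _ _) _.
  have B1 := M_nrm k (x + (z - tau z)).
  have B2 : nrm (M k (z - tau z)) <= eta / 2.
    rewrite MB M_tau nrm_symm; apply: le_trans (M_tele_nrm _ _) _; exact: HN.
  rewrite -/d in Hr; lra.
have Hcau : phi_cauchy star phi (fun k => M k x).
  move=> e e0.
  pose D := 4%:R * (2%:R * d + 1).
  have D0 : 0 < D by rewrite /D mulr_gt0 // ltr_pwDr // mulr_ge0.
  have e2 : 0 < e ^+ 2 by rewrite exprn_gt0.
  pose eta := e ^+ 2 / (D + e ^+ 2).
  have De0 : 0 < D + e ^+ 2 by rewrite addr_gt0.
  have eta0 : 0 < eta by rewrite divr_gt0.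
  have eta1 : eta <= 1 by rewrite ler_pdivrMr // mul1r lerDr ltW.
  have etaD : eta * D <= e ^+ 2.
    by rewrite mulrAC ler_pdivrMr // ler_pM2l // lerDl ltW.
  have [N HN] := claimB eta eta0.
  exists (maxn N 1) => m n Nm Nn.
  have mN : (N <= m)%N by apply: (leq_trans (leq_maxl N 1)); apply: ltnW.
  have nN : (N <= n)%N by apply: (leq_trans (leq_maxl N 1)); apply: ltnW.
  have m0 : (0 < m)%N by apply: (leq_trans (leq_maxr N 1)); apply: ltnW.
  have n0 : (0 < n)%N by apply: (leq_trans (leq_maxr N 1)); apply: ltnW.
  set a := M m x; set b := M n x.
  set h := ((2%:R : R)^-1)%:C *: (a + b).
  have Wh : Wset (h - x) by rewrite half_id; apply: WZ; apply: WD; apply: W_M.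
  have dh : d <= nrm h by have := d_le _ Wh; rewrite addrC subrK.
  have ab : a + b = (2%:R : R)%:C *: h.
    by rewrite /h scalerA -rmorphM mulfV ?pnatr_eq0 // rmorph1 scale1r.
  have qab : q (a + b) = 4%:R * nrm h ^+ 2 by rewrite ab qZR nrm_sq; congr (_ * _); rewrite -natrX.
  have Hpar := parallelogram a b.
  have Ha := HN m mN; have Hb := HN n nN.
  have qa : q a <= (d + eta) ^+ 2 by rewrite -nrm_sq; have := nrm_ge0 a; nra.
  have qb : q b <= (d + eta) ^+ 2 by rewrite -nrm_sq; have := nrm_ge0 b; nra.
  have hh : d ^+ 2 <= nrm h ^+ 2 by nra.
  have qamb : q (a - b) <= e ^+ 2.
    have : q (a - b) <= 4%:R * (d + eta) ^+ 2 - 4%:R * d ^+ 2 by lra.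
    move=> H; apply: le_trans H _; move: etaD; rewrite /D; nra.
  rewrite -(ger0_norm (nrm_ge0 (a - b))) -(ger0_norm (ltW e0)).
  rewrite -ler_sqr ?inE ?normr_ge0 // !real_normK ?num_real // nrm_sq //.
have Htel : (fun n => nrm (tau (M n x) - M n x)) @ \oo --> (0 : R).
  apply/cvg0P => e e0.
  have [N HN] := inv_small _ _ (mulr_ge0 (ler0n R 2) (nrm_ge0 x)) e0.
  exists N => n Nn; rewrite ger0_norm ?nrm_ge0 //.
  by apply: le_trans (M_tele_nrm _ _) _; apply: HN.
have [al Hal] := Herg (fun k => M k x) Htel Hcau.
have Hphi : forall e : R, 0 < e -> exists n, (0 < n)%N /\ nrm (M n x - al%:A) <= e.
  move=> e e0; have [N HN] := (cvg0P _).1 Hal e e0.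
  exists N.+1; split => //; have := HN N.+1 (leqnSn N).
  by rewrite ger0_norm ?nrm_ge0.
have phiE : forall n, (0 < n)%N -> phi (M n x - al%:A) = phi x - al.
  by move=> n n0; rewrite phiB phi_M // phiZ phi1 mulr1.
have ReE : cRe (phi x - al) = 0.
  apply: small0 => e e0; have [n [n0 Hn]] := Hphi e e0.
  by rewrite -(phiE n n0); apply: le_trans (Re_phi_le _) Hn.
have ImE : cIm (phi x - al) = 0.
  apply: small0 => e e0; have [n [n0 Hn]] := Hphi e e0.
  by rewrite -(phiE n n0); apply: le_trans (Im_phi_le _) Hn.
have alE : al = phi x.
  apply: cplx_ext; move: ReE ImE; rewrite ReD ImD ReN ImN; lra.
have -> : (fun n => nrm (dev x n)) = (fun n => nrm (M n x - al%:A)).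
  by apply: funext => n; rewrite devE alE.
exact: Hal.
Qed.

End Dyn.
End Alg.
Theorem proposition4p5 (R : realType) (A : algType R[i]) (star : A -> A)
  (phi : A -> R[i]) (tau : A -> A) (T : A -> Prop) :
  is_star_dyn_system star phi tau ->
  phi_total star phi T ->
  (ergodic star phi tau ->
     forall x : A,
       (fun n => phinorm star phi (erg_avg_dev phi tau x n)) @ \oo --> (0 : R)) /\
  ((forall x : A, T x ->
       (fun n => phinorm star phi (erg_avg_dev phi tau x n)) @ \oo --> (0 : R)) ->
     ergodic star phi tau).
Proof.
move=> [Hinv [Hst [Htau [Htau1 Hcontr]]]] Htot; split.
- exact: (part1 _ _ _ _ _ Hinv Hst Htau Htau1 Hcontr).
- exact: (part2 _ _ _ _ _ Hinv Hst Htau Hcontr _ Htot).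
Qed.
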